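(* Let $\mathcal{Q}_A,\mathcal{K}_A,\mathcal{Q}_B,\mathcal{K}_B$ be finite nonempty sets of values, and let $\mathrm{pred}_A:\mathcal{Q}_A\times\mathcal{K}_A\to\{0,1\}$ and $\mathrm{pred}_B:\mathcal{Q}_B\times\mathcal{K}_B\to\{0,1\}$ be predicates. Let the disjoint union $\mathcal{Q}_A\sqcup\mathcal{K}_A\sqcup\mathcal{Q}_B\sqcup\mathcal{K}_B$ index an orthonormal family of vectors $e_v\in\mathbb{R}^d$ (so the four value sets are embedded one-hot in mutually orthogonal subspaces $Q_A,K_A,Q_B,K_B$). A query token carries a pair $(a,b)\in\mathcal{Q}_A\times\mathcal{Q}_B$ with query vector $e_a+e_b$, and a key token carries a pair $(a',b')\in\mathcal{K}_A\times\mathcal{K}_B$ with key vector $e_{a'}+e_{b'}$. Define the combined selection $$S\big((a,b),(a',b')\big)=\mathrm{pred}_A(a,a')\ \vee\ \mathrm{pred}_B(b,b').$$ Suppose there is a matrix $W\in\mathbb{R}^{d\times d}$ such that the logits $L\big((a,b),(a',b')\big)=(e_a+e_b)^\top W(e_{a'}+e_{b'})$ satisfy, for every query $q\in\mathcal{Q}_A\times\mathcal{Q}_B$ and all keys $k,k'\in\mathcal{K}_A\times\mathcal{K}_B$: (i) if $S(q,k)=S(q,k')=1$ then $L(q,k)=L(q,k')$; and (ii) if $S(q,k)=1$ and $S(q,k')=0$ then $L(q,k)>L(q,k')$. (These are the conditions under which, in the zero-temperature limit $T\to0^+$ of $\mathrm{softmax}(T^{-1}L)$ over any set of key tokens, the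 attention weights converge to the uniform distribution over the tokens selected by $S$, i.e. to the normalized weights of the selector ''$\mathrm{select}(\mathrm{query}_A,\mathrm{key}_A,\mathrm{pred}_A)$ or $\mathrm{select}(\mathrm{query}_B,\mathrm{key}_B,\mathrm{pred}_B)$''.) Then either $\mathrm{pred}_A$ is constant, or $\mathrm{pred}_B$ is constant, or both predicates have rank one, meaning there exist functions $f_A:\mathcal{Q}_A\to\{0,1\}$, $g_A:\mathcal{K}_A\to\{0,1\}$ with $\mathrm{pred}_A(a,a')=f_A(a)\wedge g_A(a')$ for all $a,a'$, and likewise $f_B,g_B$ with $\mathrm{pred}_B(b,b')=f_B(b)\wedge g_B(b')$ for all $b,b'$.
   Context: This concerns implementing a Boolean ''or'' of two RASP selectors as a single attention head. A RASP selector $\mathrm{select}(\mathrm{query},\mathrm{key},\mathrm{pred})$ evaluated on a sequence gives the $0/1$ matrix whose $(i,j)$ entry is $\mathrm{pred}(\mathrm{query}_i,\mathrm{key}_j)$. An attention head with bilinear form $W$ (the $W_{QK}$ matrix) assigns to query token $i$ and key token $j$ the logit $x_i^\top W x_j$, where $x_i$ is the token's residual-stream vector, and attention weights are $\mathrm{softmax}$ of the logits scaled by an inverse temperature $T^{-1}$. *)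

(* Defs.v *)
From HB Require Import structures.
From mathcomp Require Import all_boot all_order all_algebra.
From mathcomp Require Import reals.
Set Implicit Arguments. Unset Strict Implicit. Unset Printing Implicit Defensive.
Import Order.TTheory GRing.Theory Num.Theory.
Local Open Scope ring_scope.

Definition vidx (QA KA QB KB : finType) : finType := (QA + KA + QB + KB)%type.

Definition iQA {QA KA QB KB : finType} (a : QA) : vidx QA KA QB KB :=
  inl (inl (inl a)).
Definition iKA {QA KA QB KB : finType} (a : KA) : vidx QA KA QB KB :=
  inl (inl (inr a)).
Definition iQB {QA KA QB KB : finType} (b : QB) : vidx QA KA QB KB :=
  inl (inr b).
Definition iKB {QA KA QB KB : finType} (b : KB) : vidx QA KA QB KB :=
  inr b.

Definition dotv {R : ringType} {d : nat} (x y : 'cV[R]_d) : R :=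
  ((x^T *m y) 0 0).

Definition orthonormal_family {R : ringType} {d : nat} {I : finType}
  (e : I -> 'cV[R]_d) : Prop :=
  forall u v : I, dotv (e u) (e v) = (u == v)%:R.

Definition bilin {R : ringType} {d : nat} (W : 'M[R]_d) (x y : 'cV[R]_d) : R :=
  ((x^T *m W *m y) 0 0).

Definition const_pred {Q K : Type} (p : Q -> K -> bool) : Prop :=
  exists c : bool, forall a a', p a a' = c.

Definition rank_one_pred {Q K : Type} (p : Q -> K -> bool) : Prop :=
  exists (f : Q -> bool) (g : K -> bool), forall a a', p a a' = f a && g a'.

(* Main.v *)
Require Import Defs.
From HB Require Import structures.
From mathcomp Require Import all_boot all_order all_algebra.
From mathcomp Require Import reals.
From mathcomp Require Import lra.
From Stdlib Require Import Classical.
Import Order.TTheory GRing.Theory Num.Theory.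
Local Open Scope ring_scope.

Section Core.
Variable R : realType.
Variables (QA KA QB KB : finType).

Definition Lg (al : QA -> KA -> R) (be : QA -> KB -> R) (ga : QB -> KA -> R)
  (de : QB -> KB -> R) a b a' b' := al a a' + be a b' + ga b a' + de b b'.

Definition H1 (pA : QA -> KA -> bool) (pB : QB -> KB -> bool) al be ga de :=
  forall a b a' b' a'' b'', pA a a' || pB b b' -> pA a a'' || pB b b'' ->
    Lg al be ga de a b a' b' = Lg al be ga de a b a'' b''.
Definition H2 (pA : QA -> KA -> bool) (pB : QB -> KB -> bool) al be ga de :=
  forall a b a' b' a'' b'', pA a a' || pB b b' -> ~~ (pA a a'' || pB b b'') ->
    Lg al be ga de a b a'' b'' < Lg al be ga de a b a' b'.

Definition rowc {Q K : Type} (p : Q -> K -> bool) a := forall x y, p a x = p a y.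

Lemma rows pA pB al be ga de : H1 pA pB al be ga de -> H2 pA pB al be ga de ->
  forall a b, rowc pA a \/ rowc pB b.
Proof.
move=> h1 h2 a b; apply: NNPP => /not_or_and [nA nB].
have [x1 [x0 [hx1 hx0]]] : exists x1 x0, pA a x1 /\ ~~ pA a x0.
  apply: NNPP => hn; apply: nA => x y.
  case ex: (pA a x); case ey: (pA a y) => //; exfalso; apply: hn.
  - by exists x, y; rewrite ex ey.
  - by exists y, x; rewrite ex ey.
have [y1 [y0 [hy1 hy0]]] : exists y1 y0, pB b y1 /\ ~~ pB b y0.
  apply: NNPP => hn; apply: nB => x y.
  case ex: (pB b x); case ey: (pB b y) => //; exfalso; apply: hn.
  - by exists x, y; rewrite ex ey.
  - by exists y, x; rewrite ex ey.
have e1 := h1 a b x1 y0 x1 y1; have e2 := h1 a b x0 y1 x1 y1.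
have e3 := h2 a b x1 y1 x0 y0.
rewrite hx1 hy1 (negbTE hx0) (negbTE hy0) /= in e1 e2 e3.
have := e1 erefl erefl; have := e2 erefl erefl; have := e3 erefl erefl.
rewrite /Lg; lra.
Qed.

Lemma rank pA pB al be ga de : H1 pA pB al be ga de -> H2 pA pB al be ga de ->
  (forall a, rowc pA a) -> ~ const_pred pA -> rank_one_pred pB.
Proof.
move=> h1 h2 hr nc.
have [a1 [x1 t1]] : exists a x, pA a x.
  apply: NNPP => hn; apply: nc; exists false => a x.
  by apply/negP => hp; apply: hn; exists a, x.
have [a0 [x0 t0]] : exists a x, ~~ pA a x.
  apply: NNPP => hn; apply: nc; exists true => a x.
  by apply/negPn/negP => hp; apply: hn; exists a, x.
pose h b' := be a0 b' - be a1 b'.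
have key : forall b b' b'', pB b b' ->
    (pB b b'' -> h b'' = h b') /\ (~~ pB b b'' -> h b'' < h b').
  move=> b b' b'' hb'.
  have E1 := h1 a1 b x0 b' x0 b''.
  rewrite (hr a1 x0 x1) t1 /= in E1.
  have {}E1 := E1 erefl erefl.
  split.
  - move=> hb''; have E2 := h1 a0 b x0 b' x0 b''.
    rewrite hb' hb'' orbT /= in E2; have {}E2 := E2 erefl erefl.
    move: E1 E2; rewrite /Lg /h; lra.
  - move=> hb''; have E2 := h2 a0 b x0 b' x0 b''.
    rewrite hb' (negbTE hb'') orbT (negbTE t0) /= in E2.
    have {}E2 := E2 erefl erefl.
    move: E1 E2; rewrite /Lg /h; lra.
exists (fun b => [exists y, pB b y]), (fun b' => [forall y, h y <= h b']).
move=> b b'; case hb: (pB b b').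
  apply/esym/andP; split; first by apply/existsP; exists b'.
  apply/forallP => y; have [k1 k2] := key b b' y hb.
  by case hy: (pB b y); [rewrite (k1 hy) | apply/ltW/k2; rewrite hy].
apply/esym/negbTE/negP => /andP [/existsP [y hy] /forallP hf].
have [_ k2] := key b y b' hy; have := k2 (negbT hb); have := hf y; lra.
Qed.
End Core.
Arguments Lg {R QA KA QB KB}.
Arguments H1 {R QA KA QB KB}.
Arguments H2 {R QA KA QB KB}.
Arguments rows {R QA KA QB KB pA pB al be ga de}.
Arguments rank {R QA KA QB KB pA pB al be ga de}.

Lemma bilinD (R : ringType) d (W : 'M[R]_d) x y z w :
  bilin W (x + y) (z + w) = bilin W x z + bilin W x w + bilin W y z + bilin W y w.
Proof.
rewrite /bilin linearD /= !mulmxDl !mulmxDr !mxE addrA.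
by rewrite -!addrA; congr (_ + _); rewrite addrCA.
Qed.

Theorem mainTheorem1 (R : realType) (d : nat) (QA KA QB KB : finType)
  (neQA : (0 < #|QA|)%N) (neKA : (0 < #|KA|)%N)
  (neQB : (0 < #|QB|)%N) (neKB : (0 < #|KB|)%N)
  (predA : QA -> KA -> bool) (predB : QB -> KB -> bool)
  (e : vidx QA KA QB KB -> 'cV[R]_d) (e_on : orthonormal_family e)
  (W : 'M[R]_d) :
  let S := fun (q : QA * QB) (k : KA * KB) => predA q.1 k.1 || predB q.2 k.2 in
  let L := fun (q : QA * QB) (k : KA * KB) =>
    bilin W (e (iQA q.1) + e (iQB q.2)) (e (iKA k.1) + e (iKB k.2)) in
  (forall q k k', S q k -> S q k' -> L q k = L q k') ->
  (forall q k k', S q k -> ~~ S q k' -> L q k' < L q k) ->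
  const_pred predA \/ const_pred predB \/
  (rank_one_pred predA /\ rank_one_pred predB).
Proof.
move=> S L hS1 hS2.
pose al a a' := bilin W (e (iQA a)) (e (iKA a')).
pose be a b' := bilin W (e (iQA a)) (e (iKB b')).
pose ga b a' := bilin W (e (iQB b)) (e (iKA a')).
pose de b b' := bilin W (e (iQB b)) (e (iKB b')).
have LE : forall a b a' b', L (a, b) (a', b') = Lg al be ga de a b a' b'.
  by move=> a b a' b'; rewrite /L /= bilinD.
have h1 : H1 predA predB al be ga de.
  by move=> a b a' b' a'' b'' s1 s2; rewrite -!LE; exact: (hS1 (a,b) (a',b') (a'',b'')).
have h2 : H2 predA predB al be ga de.
  by move=> a b a' b' a'' b'' s1 s2; rewrite -!LE; exact: (hS2 (a,b) (a',b') (a'',b'')).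
have h1' : H1 predB predA de ga be al.
  move=> b a b' a' b'' a'' s1 s2; rewrite /Lg.
  have := h1 a b a' b' a'' b''; rewrite orbC s1 orbC s2 /Lg => /(_ erefl erefl).
  lra.
have h2' : H2 predB predA de ga be al.
  move=> b a b' a' b'' a'' s1 s2; rewrite /Lg.
  have := h2 a b a' b' a'' b''; rewrite orbC s1 orbC s2 /Lg => /(_ erefl erefl).
  lra.
have r1 : forall (Q K : finType) (p : Q -> K -> bool),
    (forall a, rowc p a) -> rank_one_pred p.
  move=> Q K p hr; exists (fun a => [exists x, p a x]), (fun _ => true) => a a'.
  rewrite andbT; apply/esym; case h: (p a a'); first by apply/existsP; exists a'.
  by apply/negbTE/existsP => [[x hx]]; rewrite (hr a x a') h in hx.
have := rows h1 h2.
case: (classic (forall a, rowc predA a)) => [hA | nA] hrows.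
  case: (classic (const_pred predA)) => [c|nc]; first by left.
  by right; right; split; [exact: r1 | exact: (rank h1 h2 hA nc)].
have [a na] := not_all_ex_not _ _ nA.
have hB : forall b, rowc predB b by move=> b; case: (hrows a b).
case: (classic (const_pred predB)) => [c|nc]; first by right; left.
by right; right; split; [exact: (rank h1' h2' hB nc) | exact: r1].
Qed.
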